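(* Let $\mathcal{X}$ be a finite set, let $d\geq 1$, let $H:\mathcal{X}^{d+1}\to\mathbb{R}$ be any function and let $r\in\mathcal{P}_+(\mathcal{X})$. Then there exist functions $\kappa:\mathcal{X}^d\to\mathbb{R}$ and $\delta:\mathcal{X}\to\mathbb{R}$ such that the function \[ w(x_{d+1}|x_{1:d}) = \exp\bigl(H(x_{1:(d+1)})+\kappa(x_{2:(d+1)})-\kappa(x_{1:d})-\delta(x_{d+1})\bigr),\qquad x_{1:(d+1)}\in\mathcal{X}^{d+1}, \] belongs to $\mathcal{W}_d$ and its first-order stationary distribution satisfies $p_w^{(1)}(x_1)=r(x_1)$ for all $x_1\in\mathcal{X}$.
   Context: $\mathcal{P}_+(\mathcal{X})$ denotes the set of strictly positive probability distributions on the finite set $\mathcal{X}$. For $s\le t$, $x_{s:t}$ abbreviates $(x_s,\ldots,x_t)$. A $d$-th-order Markov kernel is a function $w:\mathcal{X}^{d+1}\to[0,\infty)$, written $w(y|x_{1:d})$, with $\sum_{y\in\mathcal{X}}w(y|x_{1:d})=1$ for every $x_{1:d}\in\mathcal{X}^d$; $\mathcal{W}_d$ is the set of strictly positive $d$-th-order Markov kernels. For $w\in\mathcal{W}_d$, its stationary distribution $p_w^{(d)}$ is the unique probability distribution on $\mathcal{X}^d$ satisfying $\sum_{x_1\in\mathcal{X}}p_w^{(d)}(x_{1:d})\,w(x_{d+1}|x_{1:d})=p_w^{(d)}(x_{2:(d+1)})$ for all $x_{2:(d+1)}\in\mathcal{X}^d$ (equivalently, the stationary distribution of the first-order chain on $\mathcal{X}^d$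 moving from $x_{1:d}$ to $x_{2:(d+1)}$ with probability $w(x_{d+1}|x_{1:d})$). The first-order stationary distribution is $p_w^{(1)}(x_1)=\sum_{x_{2:d}}p_w^{(d)}(x_{1:d})$. *)

(* Defs.v *)
From mathcomp Require Import all_boot all_order all_algebra.
From mathcomp Require Import all_classical all_reals all_analysis.
Set Implicit Arguments. Unset Strict Implicit. Unset Printing Implicit Defensive.
Import Order.TTheory GRing.Theory Num.Theory.
Local Open Scope ring_scope.

(* Elements of X^d are finite functions 'I_d -> X, i.e. (x_1,...,x_d). *)

Definition init_t (X : finType) (d : nat) (t : {ffun 'I_d.+1 -> X}) : {ffun 'I_d -> X} :=
  [ffun i => t (widen_ord (leqnSn d) i)].

Definition tail_t (X : finType) (d : nat) (t : {ffun 'I_d.+1 -> X}) : {ffun 'I_d -> X} :=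
  [ffun i => t (lift ord0 i)].

Definition snoc (X : finType) (d : nat) (s : {ffun 'I_d -> X}) (y : X) : {ffun 'I_d.+1 -> X} :=
  [ffun i : 'I_d.+1 => if unlift ord_max i is Some j then s j else y].

Definition is_pos_dist (R : realType) (X : finType) (r : X -> R) : Prop :=
  (forall x, 0 < r x) /\ \sum_(x : X) r x = 1.

(* w ∈ W_d : strictly positive d-th order Markov kernel, w s y = w(y | s) *)
Definition in_Wd (R : realType) (X : finType) (d : nat)
  (w : {ffun 'I_d -> X} -> X -> R) : Prop :=
  (forall s y, 0 < w s y) /\ (forall s, \sum_(y : X) w s y = 1).

Definition is_stationary (R : realType) (X : finType) (d : nat)
  (w : {ffun 'I_d -> X} -> X -> R) (p : {ffun 'I_d -> X} -> R) : Prop :=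
  [/\ (forall s, 0 <= p s), \sum_(s : {ffun 'I_d -> X}) p s = 1 &
      forall z : {ffun 'I_d -> X},
        \sum_(t : {ffun 'I_d.+1 -> X} | tail_t t == z) p (init_t t) * w (init_t t) (t ord_max)
        = p z].

Definition first_marginal (R : realType) (X : finType) (d : nat) (hd : (0 < d)%N)
  (p : {ffun 'I_d -> X} -> R) (x1 : X) : R :=
  \sum_(s : {ffun 'I_d -> X} | s (Ordinal hd) == x1) p s.

(* Main.v *)
Require Import Defs.
From mathcomp Require Import all_boot all_order all_algebra.
From mathcomp Require Import all_classical all_reals all_analysis.
Import Order.TTheory GRing.Theory Num.Theory.
Local Open Scope ring_scope.
From mathcomp Require Import ring lra.

Module M1.
Import Order.TTheory GRing.Theory Num.Theory.
Set Implicit Arguments. Unset Strict Implicit. Unset Printing Implicit Defensive.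
Local Open Scope ring_scope.
Section Comb.
Variables (X : finType) (d : nat).
Local Notation S := {ffun 'I_d -> X}.
Local Notation T := {ffun 'I_d.+1 -> X}.

Definition cons_t (x : X) (u : S) : T :=
  [ffun i : 'I_d.+1 => if unlift ord0 i is Some j then u j else x].

Lemma snoc_max (s : S) y : snoc s y ord_max = y.
Proof. by rewrite ffunE unlift_none. Qed.

Lemma snoc_lt (s : S) y (i : 'I_d.+1) (Hi : (i < d)%N) : snoc s y i = s (Ordinal Hi).
Proof.
rewrite ffunE; case: unliftP => [j Ei|Ei].
  by congr (s _); apply/val_inj; rewrite /= Ei /= /bump leqNgt ltn_ord.
by exfalso; move: Hi; rewrite Ei /= ltnn.
Qed.

Lemma init_snoc (s : S) y : init_t (snoc s y) = s.
Proof.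
apply/ffunP => i; rewrite ffunE (@snoc_lt s y (widen_ord (leqnSn d) i) (ltn_ord i)).
by congr (s _); apply/val_inj.
Qed.

Lemma snoc_init (t : T) : snoc (init_t t) (t ord_max) = t.
Proof.
apply/ffunP => i; rewrite ffunE; case: unliftP => [j ->|->] //.
by rewrite ffunE; congr (t _); apply/val_inj; rewrite /= /bump leqNgt ltn_ord.
Qed.

Lemma cons_ord0 x (u : S) : cons_t x u ord0 = x.
Proof. by rewrite ffunE unlift_none. Qed.

Lemma tail_cons x (u : S) : tail_t (cons_t x u) = u.
Proof. by apply/ffunP => i; rewrite !ffunE liftK. Qed.

Lemma cons_tail (t : T) : cons_t (t ord0) (tail_t t) = t.
Proof. by apply/ffunP => i; rewrite ffunE; case: unliftP => [j ->|->] //; rewrite ffunE. Qed.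

Variable R : realType.

Lemma sum_init (u : S) (F : T -> R) :
  \sum_(t | init_t t == u) F t = \sum_y F (snoc u y).
Proof.
rewrite (reindex_onto (fun y => snoc u y) (fun t : T => t ord_max)).
  by apply: eq_bigl => y; rewrite init_snoc snoc_max !eqxx.
by move=> t /eqP <-; rewrite snoc_init.
Qed.

Lemma sum_last (x : X) (F : T -> R) :
  \sum_(t : T | t ord_max == x) F t = \sum_s F (snoc s x).
Proof.
rewrite (reindex_onto (fun s => snoc s x) (fun t : T => init_t t)).
  by apply: eq_bigl => y; rewrite init_snoc snoc_max !eqxx.
by move=> t /eqP <-; rewrite snoc_init.
Qed.

Lemma sum_tail (u : S) (F : T -> R) :
  \sum_(t | tail_t t == u) F t = \sum_x F (cons_t x u).
Proof.
rewrite (reindex_onto (fun x => cons_t x u) (fun t : T => t ord0)).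
  by apply: eq_bigl => y; rewrite tail_cons cons_ord0 !eqxx.
by move=> t /eqP <-; rewrite cons_tail.
Qed.

Lemma sum_part (F : T -> R) (g : S -> R) :
  \sum_t F t * g (init_t t) = \sum_s (\sum_(t | init_t t == s) F t) * g s.
Proof.
rewrite (partition_big (fun t : T => init_t t) predT) //=.
apply: eq_bigr => s _; rewrite big_distrl /=.
by apply: eq_bigr => t /eqP ->.
Qed.

Lemma sum_split (F : T -> R) : \sum_t F t = \sum_s \sum_y F (snoc s y).
Proof.
rewrite (partition_big (fun t : T => init_t t) predT) //=.
by apply: eq_bigr => s _; rewrite sum_init.
Qed.

End Comb.

End M1.
Import M1.

Module M2.
Import Order.TTheory GRing.Theory Num.Theory.
Set Implicit Arguments. Unset Strict Implicit. Unset Printing Implicit Defensive.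
Local Open Scope ring_scope.
Import numFieldNormedType.Exports.
Local Open Scope classical_set_scope.
Local Open Scope ring_scope.

Section Phi.
Variable R : realType.
Implicit Types x y a b : R.

Definition phi x : R := x * ln x.

Lemma ln_le_sub1 [y] : 0 < y -> ln y <= y - 1.
Proof.
move=> y0; have h : -1 < y - 1 by lra.
by have := le_ln1Dx h; rewrite addrC subrK.
Qed.

Lemma phi0 : phi 0 = 0. Proof. by rewrite /phi mul0r. Qed.

Lemma phi_bound y : `|phi y| <= 2 * Num.sqrt ((y + `|y|) / 2) + ((y + `|y|) / 2) ^+ 2.
Proof.
have h0 : 0 <= 2 * Num.sqrt ((y + `|y|) / 2) by rewrite mulr_ge0 ?sqrtr_ge0.
case: (lerP y 0) => y0.
  by rewrite /phi ln0 // mulr0 normr0 addr_ge0 ?sqr_ge0.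
have -> : (y + `|y|) / 2 = y by rewrite gtr0_norm //; lra.
case: (lerP 1 y) => y1.
  rewrite ger0_norm; last by rewrite /phi mulr_ge0 ?ln_ge0 // ltW.
  rewrite /phi expr2 -[X in X <= _]add0r lerD // ler_pM2l //.
  by have := ln_le_sub1 y0; lra.
set s := Num.sqrt y.
have s0 : 0 < s by rewrite sqrtr_gt0.
have ys : y = s ^+ 2 by rewrite sqr_sqrtr // ltW.
have s1 : s < 1 by rewrite -(ltr_pXn2r (n := 2)) ?expr1n -?ys // ?nnegrE ltW.
rewrite -[X in X <= _]addr0 lerD ?sqr_ge0 //.
rewrite /phi ys lnXn // ler0_norm; last first.
  by rewrite mulr_ge0_le0 ?sqr_ge0 // mulrn_wle0 // ln_le0 // ltW.
have h : - ln s <= s^-1.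
  rewrite -lnV ?posrE //; have := @ln_le_sub1 s^-1; rewrite invr_gt0 => /(_ s0); lra.
have hh : 0 <= s^+2 * (s^-1 + ln s) by rewrite mulr_ge0 ?sqr_ge0 //; lra.
have e : s^+2 * s^-1 = s by rewrite expr2 mulfK ?lt0r_neq0.
rewrite mulrDr e in hh.
rewrite mulrnAr; lra.
Qed.

Lemma phi_continuous : continuous phi.
Proof.
move=> x.
case: (ltrP 0 x) => x0.
  apply: continuousM; first exact: cvg_id.
  exact: continuous_ln.
set m := fun y : R => (y + `|y|) / 2.
set h := fun y : R => 2 * Num.sqrt (m y) + (m y) ^+ 2.
have hx : h x = 0.
  by rewrite /h /m ler0_norm // subrr mul0r sqrtr0 mulr0 expr0n add0r.
have phix : phi x = 0 by rewrite /phi ln0 // mulr0.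
have mc : continuous m.
  move=> y; apply: cvgM; last exact: cvg_cst.
  by apply: cvgD; [exact: cvg_id | apply: cvg_norm; exact: cvg_id].
have hc : h @ x --> h x.
  apply: cvgD; first apply: cvgM; first exact: cvg_cst.
    by apply: (continuous_comp (mc x)); exact: sqrt_continuous.
  by apply: cvgM; exact: mc.
rewrite /continuous_at phix.
apply: (@squeeze_cvgr _ _ _ _ (fun y => - h y) h).
- by near=> y; have := phi_bound y; rewrite ler_norml -/m -/h.
- have H1 := cvgN hc; rewrite hx oppr0 in H1; exact: H1.
- by rewrite hx in hc.
Unshelve. all: by end_near. Qed.

Lemma phi_tangent A x : 0 < A -> 0 <= x -> phi A + (ln A + 1) * (x - A) <= phi x.
Proof.
move=> A0; rewrite le0r => /orP[/eqP->|x0].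
  rewrite phi0 /phi; lra.
have h := ln_le_sub1 (divr_gt0 A0 x0).
rewrite lnM ?posrE ?invr_gt0 // lnV ?posrE // in h.
have h2 : x * (ln A - ln x) <= x * (A / x - 1) by rewrite ler_wpM2l // ?ltW.
rewrite !mulrBr (mulrC x (A / x)) divfK ?lt0r_neq0 // in h2.
rewrite /phi; lra.
Qed.

Lemma phi_breg x u : 0 < x -> 0 <= u ->
  phi u - phi x - (ln x + 1) * (u - x) <= (u - x) ^+ 2 / x.
Proof.
move=> x0; rewrite le0r => /orP[/eqP->|u0].
  have e : (0 - x) ^+ 2 / x = x by field; rewrite lt0r_neq0.
  rewrite e phi0 /phi; lra.
have h := ln_le_sub1 (divr_gt0 u0 x0).
rewrite lnM ?posrE ?invr_gt0 // lnV ?posrE // in h.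
have h2 : u * (ln u - ln x) <= u * (u / x - 1) by rewrite ler_wpM2l // ?ltW.
have e : (u - x) ^+ 2 / x = u * (u / x) - 2 * u + x.
  by field; rewrite lt0r_neq0.
rewrite e /phi; rewrite !mulrBr in h2; lra.
Qed.

Definition psi a b : R := a * ln b - phi a.

Lemma psi_tangent a0 b0 a b : 0 < a0 -> 0 < b0 -> 0 <= a -> 0 < b ->
  psi a b <= psi a0 b0 + (ln b0 - ln a0 - 1) * (a - a0) + (a0 / b0) * (b - b0).
Proof.
move=> a00 b00; rewrite le0r => /orP[/eqP->|a0p] b0p.
  rewrite /psi phi0 mul0r subrr.
  have : 0 <= a0 / b0 * b by rewrite mulr_ge0 // ?divr_ge0 // ltW.
  have e : a0 / b0 * b0 = a0 by rewrite divfK ?lt0r_neq0.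
  rewrite /phi; lra.
set y := a0 * b / (b0 * a).
have y0 : 0 < y by rewrite /y divr_gt0 // mulr_gt0.
have h := ln_le_sub1 y0.
have ey : ln y = ln a0 + ln b - ln b0 - ln a.
  rewrite /y lnM; last 2 first.
  - by rewrite posrE mulr_gt0.
  - by rewrite posrE invr_gt0 mulr_gt0.
  rewrite lnV ?posrE ?mulr_gt0 // !lnM ?posrE //; ring.
have h2 : a * ln y <= a * (y - 1) by rewrite ler_wpM2l // ?ltW.
have e2 : a * y = a0 / b0 * b.
  by rewrite /y; field; rewrite !lt0r_neq0.
rewrite ey !mulrBr e2 in h2.
have e3 : a0 / b0 * b0 = a0 by rewrite divfK ?lt0r_neq0.
rewrite /psi /phi; lra.
Qed.
End Phi.
Arguments phi {R} x.
Arguments psi {R} a b.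

End M2.
Import M2.

Module M3.
Import Order.TTheory GRing.Theory Num.Theory.
Set Implicit Arguments. Unset Strict Implicit. Unset Printing Implicit Defensive.
Local Open Scope ring_scope.
Import numFieldNormedType.Exports.
Local Open Scope classical_set_scope.
Local Open Scope ring_scope.

Section Cont.
Variables (R : realType) (N : nat).
Local Notation V := 'rV[R]_N.

Lemma cont_sum_seq (I : eqType) (s : seq I) (P : pred I) (F : I -> V -> R) :
  (forall i, continuous (F i)) -> continuous (fun v => \sum_(i <- s | P i) F i v).
Proof.
move=> Fc; elim: s => [|a s IH].
  rewrite (_ : (fun v => _) = fun=> 0); first exact: cst_continuous.
  by apply: funext => v; rewrite big_nil.
case Pa: (P a).
  rewrite (_ : (fun v => _) = (F a \+ (fun v => \sum_(i <- s | P i) F i v))).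
    by move=> x; apply: continuousD; [exact: Fc | exact: IH].
  by apply: funext => v; rewrite big_cons Pa.
rewrite (_ : (fun v => _) = (fun v => \sum_(i <- s | P i) F i v)) //.
by apply: funext => v; rewrite big_cons Pa.
Qed.

Lemma cont_sum (I : finType) (P : pred I) (F : I -> V -> R) :
  (forall i, continuous (F i)) -> continuous (fun v => \sum_(i | P i) F i v).
Proof. exact: cont_sum_seq. Qed.

Lemma cont_sub (f g : V -> R) : continuous f -> continuous g ->
  continuous (fun v => f v - g v).
Proof.
move=> fc gc; rewrite (_ : (fun v => f v - g v) = f \+ (fun v => - g v)) //.
move=> x; apply: continuousD; first exact: fc.
by apply: continuousN; exact: gc.
Qed.

Lemma cont_add (f g : V -> R) : continuous f -> continuous g ->
  continuous (fun v => f v + g v).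
Proof.
move=> fc gc; rewrite (_ : (fun v => f v + g v) = f \+ g) //.
by move=> x; apply: continuousD; [exact: fc | exact: gc].
Qed.

Lemma cont_mulc (f : V -> R) c : continuous f -> continuous (fun v => f v * c).
Proof.
move=> fc; rewrite (_ : (fun v => f v * c) = f \* (fun=> c)) //.
by move=> x; apply: continuousM; [exact: fc | exact: cst_continuous].
Qed.

Lemma cont_comp (f : V -> R) (g : R -> R) : continuous f -> continuous g ->
  continuous (fun v => g (f v)).
Proof. by move=> fc gc x; apply: continuous_comp; [exact: fc | exact: gc]. Qed.

Lemma closed_ge0 (f : V -> R) : continuous f -> closed [set v | 0 <= f v].
Proof.
move=> fc; apply: (@preimage_closed _ _ f [set x : R | 0 <= x]).
  by move=> x _; exact: fc.
exact: closed_ge.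
Qed.

Lemma closed_eqc (f : V -> R) c : continuous f -> closed [set v | f v = c].
Proof.
move=> fc; apply: (@preimage_closed _ _ f [set x : R | x = c]).
  by move=> x _; exact: fc.
exact: closed_eq.
Qed.

Lemma closed_all (I : Type) (F : I -> set V) : (forall i, closed (F i)) ->
  closed [set v | forall i, F i v].
Proof.
move=> Fc; rewrite (_ : [set v | forall i, F i v] = \bigcap_(i in setT) F i).
  by apply: closed_bigI => i _; exact: Fc.
by apply/seteqP; split => v /= h i //; apply: h.
Qed.
End Cont.

End M3.
Import M3.

Module M4.
Import Order.TTheory GRing.Theory Num.Theory.
Set Implicit Arguments. Unset Strict Implicit. Unset Printing Implicit Defensive.
Local Open Scope ring_scope.
Import numFieldNormedType.Exports.
Local Open Scope classical_set_scope.
Local Open Scope ring_scope.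

Section Main.
Variables (R : realType) (X : finType) (d : nat).
Local Notation S := {ffun 'I_d -> X}.
Local Notation T := {ffun 'I_d.+1 -> X}.
Variables (H : T -> R) (r : X -> R).
Hypothesis hr : is_pos_dist r.

Definition Pm (q : T -> R) (s : S) : R := \sum_(t | init_t t == s) q t.

Definition feas (q : T -> R) : Prop :=
  [/\ forall t, 0 <= q t,
      forall s : S, \sum_(t | init_t t == s) q t = \sum_(t | tail_t t == s) q t &
      forall x, \sum_(t : T | t ord_max == x) q t = r x].

Definition J (q : T -> R) : R :=
  \sum_t q t * H t - \sum_t phi (q t) + \sum_s phi (Pm q s).

Lemma r_le1 x : r x <= 1.
Proof.
case: hr => r0 <-; rewrite (bigD1 x) //= lerDl sumr_ge0 // => y _; exact: ltW.
Qed.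

Lemma feas_le1 q : feas q -> forall t, q t <= 1.
Proof.
case=> q0 _ qm t; apply: le_trans (r_le1 (t ord_max)).
by rewrite -qm (bigD1 t) //= lerDl sumr_ge0.
Qed.

Local Notation N := #|T|.
Definition vq (v : 'rV[R]_N) : T -> R := fun t => v ord0 (enum_rank t).
Definition qv (q : T -> R) : 'rV[R]_N := \row_i q (enum_val i).
Lemma vqK q : vq (qv q) = q.
Proof. by apply: funext => t; rewrite /vq /qv mxE enum_rankK. Qed.

Lemma vq_cont t : continuous (fun v => vq v t).
Proof. exact: coord_continuous. Qed.

Lemma exists_max : (exists q, feas q) ->
  exists2 qs, feas qs & forall q, feas q -> J q <= J qs.
Proof.
move=> [q1 fq1].
set A := [set v : 'rV[R]_N | feas (vq v)].
have A0 : A !=set0 by exists (qv q1); rewrite /A /= vqK.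
have Acl : closed A.
  rewrite (_ : A = [set v | forall t, 0 <= vq v t] `&`
     ([set v | forall s : S, \sum_(t | init_t t == s) vq v t - \sum_(t | tail_t t == s) vq v t = 0]
     `&` [set v | forall x, \sum_(t : T | t ord_max == x) vq v t = r x])).
    apply: closedI; first by apply: closed_all => t; apply: closed_ge0; exact: vq_cont.
    apply: closedI; apply: closed_all => s; apply: closed_eqc.
      by apply: cont_sub; apply: cont_sum => t; exact: vq_cont.
    by apply: cont_sum => t; exact: vq_cont.
  apply/seteqP; split => v /=.
    by case=> h1 h2 h3; split => //; split => // s; rewrite h2 subrr.
  case=> h1 [h2 h3]; split => // s; apply/eqP; rewrite -subr_eq0; exact/eqP.
have Acp : compact A.
  have Bc := @rV_compact R N (fun=> `[(0:R), 1]%classic) (fun _ => @segment_compact R 0 1).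
  apply: (subclosed_compact Acl Bc).
  move=> v Av i /=; rewrite in_itv /=.
  have -> : v ord0 i = vq v (enum_val i) by rewrite /vq enum_valK.
  by apply/andP; split; [case: Av => h _ _; exact: h | exact: feas_le1].
have Jc : {within A, continuous (fun v => J (vq v))}.
  apply: continuous_subspaceT; rewrite /J.
  apply: cont_add; first apply: cont_sub.
  - by apply: cont_sum => t; apply: cont_mulc; exact: vq_cont.
  - by apply: cont_sum => t; apply: cont_comp; [exact: vq_cont | exact: phi_continuous].
  - apply: cont_sum => s; apply: cont_comp; last exact: phi_continuous.
    by apply: cont_sum => t; exact: vq_cont.
have [c cA cmax] := compact_EVT_max A0 Acp Jc.
exists (vq c); first by move: cA; rewrite inE.
move=> q fq; have := cmax (qv q); rewrite vqK; apply.
by rewrite inE /A /= vqK.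
Qed.
End Main.

End M4.
Import M4.

Module M5.
Import Order.TTheory GRing.Theory Num.Theory.
Set Implicit Arguments. Unset Strict Implicit. Unset Printing Implicit Defensive.
Local Open Scope ring_scope.
Local Open Scope ring_scope.

Section Reach.
Variables (X : finType) (d : nat).
Local Notation S := {ffun 'I_d -> X}.
Local Notation T := {ffun 'I_d.+1 -> X}.

Lemma shift_nat (u : S) (y : X) (f : nat -> X) :
  (forall i : 'I_d, u i = f i) -> y = f d ->
  forall i : 'I_d, tail_t (snoc u y) i = f i.+1.
Proof.
move=> hu hy i; rewrite !ffunE; case: unliftP => [j Ej|Ej].
  rewrite hu; congr f; move/(congr1 val): Ej => /=.
  by rewrite /bump /= leqNgt ltn_ord /= add1n => ->.
by move/(congr1 val): Ej => /= Ej; rewrite hy; congr f; apply: esym; move: Ej; rewrite /bump /= add1n.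
Qed.

Lemma reach (x0 : X) (P : pred S) : (forall t : T, P (init_t t) -> P (tail_t t)) ->
  forall s0 s, P s0 -> P s.
Proof.
move=> hP s0 s P0.
set w := [seq s0 i | i <- enum 'I_d] ++ [seq s i | i <- enum 'I_d].
set m := fun k : nat => [ffun i : 'I_d => nth x0 w (i + k)].
have sz : size [seq s0 i | i <- enum 'I_d] = d by rewrite size_map size_enum_ord.
have m0 : m 0%N = s0.
  apply/ffunP => i; rewrite ffunE addn0 nth_cat sz ltn_ord.
  by rewrite (nth_map i) ?size_enum_ord // nth_ord_enum.
have md : m d = s.
  apply/ffunP => i; rewrite ffunE nth_cat sz ltnNge leq_addl /= addnK.
  by rewrite (nth_map i) ?size_enum_ord // nth_ord_enum.
have step k : P (m k) -> P (m k.+1).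
  move=> Pk.
  have e : tail_t (snoc (m k) (nth x0 w (d + k))) = m k.+1.
    apply/ffunP => i.
    rewrite (@shift_nat (m k) _ (fun n => nth x0 w (n + k))) ?ffunE ?addSnnS //.
    by move=> j; rewrite ffunE.
  by rewrite -e; apply: hP; rewrite init_snoc.
rewrite -md; elim: d => [|k IH]; first by rewrite m0.
exact: step.
Qed.

Lemma iter_shift (s : S) (z : X) k :
  iter k (fun u => tail_t (snoc u z)) s =
  [ffun i : 'I_d => nth z ([seq s i | i <- enum 'I_d] ++ nseq d z) (i + k)].
Proof.
have sz : size [seq s i | i <- enum 'I_d] = d by rewrite size_map size_enum_ord.
elim: k => [|k IH] /=.
  apply/ffunP => i; rewrite ffunE addn0 nth_cat sz ltn_ord.
  by rewrite (nth_map i) ?size_enum_ord // nth_ord_enum.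
apply/ffunP => i; rewrite IH.
rewrite (@shift_nat _ _ (fun n => nth z ([seq s i | i <- enum 'I_d] ++ nseq d z) (n + k))) ?ffunE ?addSnnS //.
  by move=> j; rewrite ffunE.
rewrite nth_cat sz ltnNge leq_addr /= nth_nseq.
by case: ifP.
Qed.

Lemma iter_shift_d (s : S) (z : X) :
  iter d (fun u => tail_t (snoc u z)) s = [ffun=> z].
Proof.
apply/ffunP => i; rewrite iter_shift !ffunE nth_cat size_map size_enum_ord.
rewrite ltnNge leq_addl /= nth_nseq; by case: ifP.
Qed.
End Reach.

End M5.
Import M5.

Module M6.
Import Order.TTheory GRing.Theory Num.Theory.
Set Implicit Arguments. Unset Strict Implicit. Unset Printing Implicit Defensive.
Local Open Scope ring_scope.
Local Open Scope ring_scope.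

Section Main2.
Variables (R : realType) (X : finType) (d : nat).
Local Notation S := {ffun 'I_d -> X}.
Local Notation T := {ffun 'I_d.+1 -> X}.
Variables (H : T -> R) (r : X -> R).
Hypothesis hr : is_pos_dist r.
Local Notation feas := (@feas R X d r).
Local Notation J := (@J R X d H).
Local Notation Pm := (@Pm R X d).

Definition q0 (t : T) : R := \prod_i r (t i).

Lemma q0_gt0 t : 0 < q0 t.
Proof. by apply: prodr_gt0 => i _; case: hr => h _; exact: h. Qed.

Lemma sum_prod_r : \sum_(s : S) \prod_i r (s i) = 1.
Proof.
rewrite -(bigA_distr_bigA (fun (i : 'I_d) (y : X) => r y)) /=.
by apply: big1 => i _; case: hr.
Qed.

Lemma q0_snoc s y : q0 (snoc s y) = (\prod_i r (s i)) * r y.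
Proof.
rewrite /q0 big_ord_recr /= snoc_max; congr (_ * _).
apply: eq_bigr => i _; congr (r _).
by have := congr1 (fun f : S => f i) (init_snoc s y); rewrite ffunE.
Qed.

Lemma q0_cons x s : q0 (cons_t x s) = r x * \prod_i r (s i).
Proof.
rewrite /q0 big_ord_recl /= cons_ord0; congr (_ * _).
apply: eq_bigr => i _; congr (r _).
by have := congr1 (fun f : S => f i) (tail_cons x s); rewrite ffunE.
Qed.

Lemma q0_feas : feas q0.
Proof.
split.
- by move=> t; exact: ltW (q0_gt0 t).
- move=> s; rewrite sum_init sum_tail.
  under eq_bigr do rewrite q0_snoc.
  under [RHS]eq_bigr do rewrite q0_cons.
  by rewrite -mulr_sumr -mulr_suml mulrC.
- move=> x; rewrite sum_last.
  under eq_bigr do rewrite q0_snoc.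
  by rewrite -mulr_suml sum_prod_r mul1r.
Qed.

Lemma J_psi q : J q = \sum_t (q t * H t + psi (q t) (Pm q (init_t t))).
Proof.
rewrite /J big_split /= /psi sumrB.
have e : \sum_s phi (Pm q s) = \sum_t q t * ln (Pm q (init_t t)).
  rewrite (sum_part q (fun s => ln (Pm q s))).
  by apply: eq_bigr => s _; rewrite /phi.
rewrite e; lra.
Qed.

Lemma sum_pred_init (P : pred S) (F : T -> R) :
  \sum_(t | P (init_t t)) F t = \sum_(s | P s) \sum_(t | init_t t == s) F t.
Proof.
rewrite (partition_big (fun t => init_t t) P) //=.
apply: eq_bigr => s Ps; apply: eq_bigl => t.
by case E: (init_t t == s); rewrite ?andbF ?andbT //; move/eqP: E => ->.
Qed.

Lemma sum_pred_tail (P : pred S) (F : T -> R) :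
  \sum_(t | P (tail_t t)) F t = \sum_(s | P s) \sum_(t | tail_t t == s) F t.
Proof.
rewrite (partition_big (fun t => tail_t t) P) //=.
apply: eq_bigr => s Ps; apply: eq_bigl => t.
by case E: (tail_t t == s); rewrite ?andbF ?andbT //; move/eqP: E => ->.
Qed.

Lemma marg_shift (q : T -> R) x :
  (forall s : S, \sum_(t | init_t t == s) q t = \sum_(t | tail_t t == s) q t) ->
  \sum_(t : T | t ord0 == x) q t = \sum_(t : T | t ord_max == x) q t.
Proof.
move=> hq.
set G := fun n : nat => \sum_(t : T | t (inord n) == x) q t.
have G0 : \sum_(t : T | t ord0 == x) q t = G 0%N.
  by apply: eq_bigl => t; rewrite (_ : inord 0 = ord0) //; apply/val_inj; rewrite /= inordK.
have Gd : \sum_(t : T | t ord_max == x) q t = G d.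
  by apply: eq_bigl => t; rewrite (_ : inord d = ord_max) //; apply/val_inj; rewrite /= inordK.
rewrite G0 Gd.
have step n : (n < d)%N -> G n = G n.+1.
  move=> nd; set i := Ordinal nd.
  have e1 : G n = \sum_(t | (fun s : S => s i == x) (init_t t)) q t.
    by apply: eq_bigl => t /=; rewrite ffunE; congr (t _ == x); apply/val_inj; rewrite /= inordK // ltnW.
  have e2 : G n.+1 = \sum_(t | (fun s : S => s i == x) (tail_t t)) q t.
    by apply: eq_bigl => t /=; rewrite ffunE; congr (t _ == x); apply/val_inj; rewrite /= inordK.
  rewrite e1 e2 (sum_pred_init (fun s : S => s i == x)) (sum_pred_tail (fun s : S => s i == x)).
  by apply: eq_bigr => s _; rewrite hq.
have : forall n, (n <= d)%N -> G 0%N = G n.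
  elim => [|n IH] nd; first exact: erefl.
  rewrite (IH (ltnW nd)); exact: step.
by apply.
Qed.
End Main2.

End M6.
Import M6.

Module M7.
Import Order.TTheory GRing.Theory Num.Theory.
Set Implicit Arguments. Unset Strict Implicit. Unset Printing Implicit Defensive.
Local Open Scope ring_scope.
Local Open Scope ring_scope.

Lemma single_le_sum (R : realType) (I : finType) (P : pred I) (F : I -> R) i :
  P i -> (forall j, P j -> 0 <= F j) -> F i <= \sum_(j | P j) F j.
Proof.
move=> Pi F0; rewrite (bigD1 i) //= lerDl; apply: sumr_ge0 => j /andP[Pj _]; exact: F0.
Qed.

Section Main3.
Variables (R : realType) (X : finType) (d : nat).
Local Notation S := {ffun 'I_d -> X}.
Local Notation T := {ffun 'I_d.+1 -> X}.
Variables (H : T -> R) (r : X -> R).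
Hypothesis hr : is_pos_dist r.
Local Notation feas := (@feas R X d r).
Local Notation J := (@J R X d H).
Local Notation Pm := (@Pm R X d).
Local Notation q0 := (@q0 R X d r).

Lemma Pm_lin (q1 q2 : T -> R) a b s :
  Pm (fun t => a * q1 t + b * q2 t) s = a * Pm q1 s + b * Pm q2 s.
Proof. by rewrite /Pm big_split /= -!mulr_sumr. Qed.

Lemma feas_lin (q1 q2 : T -> R) a b : feas q1 -> feas q2 -> 0 <= a -> 0 <= b -> a + b = 1 ->
  feas (fun t => a * q1 t + b * q2 t).
Proof.
case=> n1 s1 m1 [n2 s2 m2] a0 b0 ab; split.
- by move=> t; rewrite addr_ge0 // mulr_ge0.
- by move=> s; rewrite !big_split /= -!mulr_sumr s1 s2.
- by move=> x; rewrite big_split /= -!mulr_sumr m1 m2 -mulrDl ab mul1r.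
Qed.

Lemma Pm_ge0 q s : feas q -> 0 <= Pm q s.
Proof. by case=> q0 _ _; apply: sumr_ge0. Qed.

Lemma le_Pm q t : feas q -> q t <= Pm q (init_t t).
Proof. by case=> qn _ _; apply: single_le_sum => // j _; exact: qn. Qed.

Lemma sum_all q : feas q -> \sum_t q t = 1.
Proof.
case=> _ _ qm; rewrite (partition_big (fun t : T => t ord_max) predT) //=.
by case: hr => _ <-; apply: eq_bigr => x _; rewrite -qm.
Qed.

Lemma sum_Pm q : \sum_s Pm q s = \sum_t q t.
Proof. by rewrite (partition_big (fun t : T => init_t t) predT). Qed.

Lemma expRN1_le : expR (-1 : R) <= 2^-1.
Proof.
have h : (2 : R) <= expR 1 by have := @expR_ge1Dx R 1; rewrite (_ : 1 + 1 = 2 :> R) //.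
rewrite expRN lef_pV2 ?posrE ?expR_gt0 //.
Qed.

Lemma psi_scale (e a b : R) : 0 < e -> 0 < a -> 0 < b -> psi (e * a) (e * b) = e * psi a b.
Proof.
move=> e0 a0 b0; rewrite /psi /phi !lnM ?posrE //; ring.
Qed.

Lemma psi_conc (l a B a' b' : R) : 0 < l -> l < 1 -> 0 <= a -> 0 < B -> 0 < a' -> 0 < b' ->
  (1 - l) * psi a B + l * psi a' b' <= psi ((1 - l) * a + l * a') ((1 - l) * B + l * b').
Proof.
move=> l0 l1 a0 B0 a'0 b'0.
have m0 : 0 < (1 - l) * a + l * a' by rewrite ltr_wpDl ?mulr_ge0 ?mulr_gt0 // subr_ge0 ltW.
have bm0 : 0 < (1 - l) * B + l * b' by rewrite ltr_wpDl ?mulr_ge0 ?mulr_gt0 // ?subr_ge0 ltW.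
have h1 := psi_tangent m0 bm0 a0 B0.
have h2 := psi_tangent m0 bm0 (ltW a'0) b'0.
set m := (1 - l) * a + l * a' in m0 h1 h2 *.
set bm := (1 - l) * B + l * b' in bm0 h1 h2 *.
set L := ln bm - ln m - 1 in h1 h2.
set Q := m / bm in h1 h2.
have l1' : 0 <= 1 - l by rewrite subr_ge0 ltW.
have h1' := ler_wpM2l l1' h1.
have h2' := ler_wpM2l (ltW l0) h2.
have e : (1 - l) * (L * (a - m)) + l * (L * (a' - m)) = 0 by rewrite /m; ring.
have e' : (1 - l) * (Q * (B - bm)) + l * (Q * (b' - bm)) = 0 by rewrite /bm; ring.

lra.
Qed.
End Main3.

End M7.
Import M7.

Module M8.
Import Order.TTheory GRing.Theory Num.Theory.
Set Implicit Arguments. Unset Strict Implicit. Unset Printing Implicit Defensive.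
Local Open Scope ring_scope.
Local Open Scope ring_scope.

Section Main4.
Variables (R : realType) (X : finType) (d : nat).
Local Notation S := {ffun 'I_d -> X}.
Local Notation T := {ffun 'I_d.+1 -> X}.
Variables (H : T -> R) (r : X -> R).
Hypothesis hr : is_pos_dist r.
Local Notation feas := (@feas R X d r).
Local Notation J := (@J R X d H).
Local Notation Pm := (@Pm R X d).
Local Notation q0 := (@q0 R X d r).

Lemma psi00 : psi (0 : R) 0 = 0.
Proof. by rewrite /psi phi0 mul0r subrr. Qed.

Lemma Pm_q0_gt0 s : 0 < Pm q0 s.
Proof.
have [x0 _] : exists x : X, True.
  case: (pickP (@predT X)) => [x _|h]; first by exists x.
  by case: hr => _; rewrite big_pred0 // => /eqP; rewrite eq_sym oner_eq0.
apply: (lt_le_trans (q0_gt0 hr (snoc s x0))).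
by have := le_Pm (snoc s x0) (@q0_feas R X d r hr); rewrite init_snoc.
Qed.

Lemma no_zero_above qs : feas qs -> (forall q, feas q -> J q <= J qs) ->
  forall t0, 0 < Pm qs (init_t t0) -> 0 < qs t0.
Proof.
move=> fqs qmax t0 B0.
have fq0 := @q0_feas R X d r hr.
case: (ltrP 0 (qs t0)) => // qt0; exfalso.
have qt00 : qs t0 = 0 by apply/eqP; rewrite eq_le qt0; case: fqs => h _ _; rewrite h.
set B := Pm qs (init_t t0) in B0.
set a0 := q0 t0.
have a00 : 0 < a0 := q0_gt0 hr t0.
set b0 := Pm q0 (init_t t0).
have b00 : 0 < b0 := Pm_q0_gt0 _.
set K := ln (B / 2) - ln b0.
set C := J q0 - J qs.
set M := 1 + `|K| + `|C| / a0.
have M1 : 1 <= M by rewrite /M -addrA lerDl addr_ge0 ?divr_ge0 // ltW.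
set e := expR (- M).
have e0 : 0 < e := expR_gt0 _.
have e12 : e <= 2^-1.
  apply: le_trans (expRN1_le R); rewrite /e ler_expR lerN2 //.
have e1 : e < 1 by apply: (le_lt_trans e12); rewrite invf_lt1 // ltr1n.
have lne : ln e = - M by rewrite /e expRK.
set qe := fun t => (1 - e) * qs t + e * q0 t.
have fqe : feas qe by apply: feas_lin => //; [rewrite subr_ge0 ltW | exact: ltW | ring].
have Jle := qmax _ fqe.
have key t : (1 - e) * psi (qs t) (Pm qs (init_t t)) + e * psi (q0 t) (Pm q0 (init_t t))
      + (if t == t0 then e * a0 * (K + M) else 0)
      <= psi (qe t) (Pm qe (init_t t)).
  rewrite /qe Pm_lin.
  have qs0 : 0 <= qs t by case: fqs => h _ _; exact: h.
  have qsP := le_Pm t fqs.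
  have a'0 := q0_gt0 hr t.
  have b'0 := Pm_q0_gt0 (init_t t).
  case: (eqVneq t t0) => [->|tt0].
    rewrite ?eqxx qt00 -/a0 -/b0 -/B mulr0 add0r.
    have hb1 : 2^-1 <= 1 - e by lra.
    have hb2 : B / 2 <= (1 - e) * B by rewrite mulrC; apply: ler_wpM2r => //; exact: ltW.
    have hb3 : 0 <= e * b0 by rewrite mulr_ge0 // ltW.
    have hbm : B / 2 <= (1 - e) * B + e * b0 by lra.
    have hB2 : 0 < B / 2 by rewrite divr_gt0.
    have lnb : ln (B / 2) <= ln ((1 - e) * B + e * b0).
      by rewrite ler_ln ?posrE // (lt_le_trans hB2 hbm).
    have p0 : psi 0 B = 0 by rewrite /psi phi0 mul0r subrr.
    rewrite p0 /psi /phi lnM ?posrE // lne /K.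
    have := ler_wpM2l (ltW (mulr_gt0 e0 a00)) lnb.
    lra.
  rewrite ?(negbTE tt0) addr0.
  case: (ltrP 0 (Pm qs (init_t t))) => Bt.
    exact: psi_conc.
  have Bt0 : Pm qs (init_t t) = 0 by apply/eqP; rewrite eq_le Bt (Pm_ge0 (init_t t) fqs).
  have qt0' : qs t = 0 by apply/eqP; rewrite eq_le qs0 andbT -Bt0.
  rewrite Bt0 qt0' psi00 !mulr0 !add0r psi_scale //.
have lb : (1 - e) * J qs + e * J q0 + e * a0 * (K + M) <= J qe.
  rewrite !(J_psi H) /qe.
  have e2 : \sum_t (if t == t0 then e * a0 * (K + M) else 0) = e * a0 * (K + M).
    by rewrite -big_mkcond /= big_pred1_eq.
  rewrite -e2 !mulr_sumr -!big_split /=; apply: ler_sum => t _.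
  have := key t; rewrite /qe; move: (if _ then _ else _) => I1; move: (psi ((1 - e) * qs t + e * q0 t) _) => P1; move: (psi (qs t) _) => P2; move: (psi (q0 t) _) => P3; lra.
have : 0 < C + a0 * (K + M).
  have hK : - `|K| <= K by rewrite lerNl -normrN ler_norm.
  have hC : - `|C| <= C by rewrite lerNl -normrN ler_norm.
  have : a0 * (K + M) >= a0 * (1 + `|C| / a0).
    apply: ler_wpM2l; [exact: ltW | rewrite /M; lra].
  rewrite mulrDr mulr1 mulrCA divff ?mulr1 ?lt0r_neq0 //.
  lra.
move=> pos.
have : 0 < e * (C + a0 * (K + M)) by rewrite mulr_gt0.
rewrite /C; lra.
Qed.
End Main4.

End M8.
Import M8.

Module M9.
Import Order.TTheory GRing.Theory Num.Theory.
Set Implicit Arguments. Unset Strict Implicit. Unset Printing Implicit Defensive.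
Local Open Scope ring_scope.
Local Open Scope ring_scope.

Lemma small_le0 (R : realType) (D K e0 : R) : 0 < e0 -> 0 <= K ->
  (forall e, 0 < e -> e <= e0 -> D <= e * K) -> D <= 0.
Proof.
move=> e00 K0 h; case: (lerP D 0) => // D0; exfalso.
set e := Num.min e0 (D / (K + 1)).
have K1 : 0 < K + 1 by lra.
have ep : 0 < e by rewrite lt_min e00 divr_gt0.
have ee0 : e <= e0 by rewrite ge_min lexx.
have eD : e <= D / (K + 1) by rewrite ge_min lexx orbT.
rewrite ler_pdivlMr // in eD.
have := h e ep ee0; nra.
Qed.

Section Main5.
Variables (R : realType) (X : finType) (d : nat).
Local Notation S := {ffun 'I_d -> X}.
Local Notation T := {ffun 'I_d.+1 -> X}.
Variables (H : T -> R) (r : X -> R).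
Hypothesis hr : is_pos_dist r.
Local Notation feas := (@feas R X d r).
Local Notation J := (@J R X d H).
Local Notation Pm := (@Pm R X d).

Lemma X_inhabited : exists x : X, True.
Proof.
case: (pickP (@predT X)) => [x _|h]; first by exists x.
by case: hr => _; rewrite big_pred0 // => /eqP; rewrite eq_sym oner_eq0.
Qed.

Lemma all_pos qs : feas qs -> (forall q, feas q -> J q <= J qs) -> forall t, 0 < qs t.
Proof.
move=> fqs qmax.
have [x0 _] := X_inhabited.
have nz := no_zero_above hr fqs qmax.
have Pall : forall s, 0 < Pm qs s.
  have [s0 Ps0] : exists s0, 0 < Pm qs s0.
    case: (pickP (fun s => 0 < Pm qs s)) => [s0 h|h]; first by exists s0.
    have : \sum_s Pm qs s <= 0.
      by apply: sumr_le0 => s _; rewrite leNgt h.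
    by rewrite sum_Pm (sum_all hr fqs) ler10.
  move=> s; apply: (reach x0 (P := fun s => 0 < Pm qs s)) Ps0 => t Pt.
  have qt := nz t Pt.
  rewrite /Pm; case: fqs => qn qsh _; rewrite qsh.
  by apply: (lt_le_trans qt); apply: single_le_sum => // j _; exact: qn.
by move=> t; apply: nz; exact: Pall.
Qed.
End Main5.

End M9.
Import M9.

Module M10.
Import Order.TTheory GRing.Theory Num.Theory.
Set Implicit Arguments. Unset Strict Implicit. Unset Printing Implicit Defensive.
Local Open Scope ring_scope.
Local Open Scope ring_scope.

Section Main6.
Variables (R : realType) (X : finType) (d : nat).
Local Notation S := {ffun 'I_d -> X}.
Local Notation T := {ffun 'I_d.+1 -> X}.
Variables (H : T -> R) (r : X -> R).
Hypothesis hr : is_pos_dist r.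
Local Notation feas := (@feas R X d r).
Local Notation J := (@J R X d H).
Local Notation Pm := (@Pm R X d).

Definition cvec (qs : T -> R) (t : T) : R := H t - ln (qs t) + ln (Pm qs (init_t t)).

Lemma foc qs : feas qs -> (forall q, feas q -> J q <= J qs) ->
  forall v : T -> R,
  (forall s : S, \sum_(t | init_t t == s) v t = \sum_(t | tail_t t == s) v t) ->
  (forall x, \sum_(t : T | t ord_max == x) v t = 0) ->
  \sum_t v t * cvec qs t = 0.
Proof.
move=> fqs qmax v vsh vm.
have qp := all_pos hr fqs qmax.
have [x0 _] := X_inhabited hr.
have Pp : forall s, 0 < Pm qs s.
  move=> s; apply: (lt_le_trans (qp (snoc s x0))).
  by have := le_Pm (snoc s x0) fqs; rewrite init_snoc.
set m := (\sum_t (qs t)^-1)^-1.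
have m0 : 0 < m.
  rewrite invr_gt0.
  have h : 0 < (qs (snoc [ffun i => x0] x0))^-1 by rewrite invr_gt0.
  apply: (lt_le_trans h); apply: single_le_sum => // j _.
  by rewrite invr_ge0 ltW.
have hs : 0 < \sum_t (qs t)^-1 by rewrite -invr_gt0.
have mle t : m <= qs t.
  rewrite -[qs t]invrK lef_pV2; first by apply: single_le_sum => // j _; rewrite invr_ge0 ltW.
  - by rewrite posrE.
  - by rewrite posrE invr_gt0.
set V := \sum_t `|v t|.
have V0 : 0 <= V by apply: sumr_ge0 => i _.
set e0 := m / (V + 1).
have e00 : 0 < e0 by rewrite divr_gt0 //; lra.
set Kq := \sum_t (v t) ^+ 2 / qs t.
have Kq0 : 0 <= Kq by apply: sumr_ge0 => i _; rewrite divr_ge0 ?sqr_ge0 // ltW.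
set D := \sum_t v t * cvec qs t.
have main : forall e, `|e| <= e0 -> e * D - e ^+ 2 * Kq <= 0.
  move=> e he.
  set qe := fun t => qs t + e * v t.
  have qe0 t : 0 <= qe t.
    have hv : `|v t| <= V by apply: single_le_sum => // j _.
    have : `|e * v t| <= e0 * V.
      by rewrite normrM; apply: ler_pM => //.
    have : e0 * V < m.
      rewrite /e0 mulrAC ltr_pdivrMr; last lra.
      by rewrite ltr_pM2l //; lra.
    move=> h1 h2; have := mle t; have := ler_norm (e * v t).
    rewrite /qe; move: h2; rewrite ler_norml => /andP[h3 h4]; lra.
  have fqe : feas qe.
    case: fqs => _ qsh qm; split => //.
    - by move=> s; rewrite !big_split /= -!mulr_sumr qsh vsh.
    - by move=> x; rewrite big_split /= -!mulr_sumr qm vm mulr0 addr0.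
  have Jle := qmax _ fqe.
  have A1 : \sum_t qe t * H t = \sum_t qs t * H t + e * \sum_t v t * H t.
    by rewrite /qe mulr_sumr -big_split /=; apply: eq_bigr => t _; ring.
  have A2 : \sum_t phi (qe t) <= \sum_t phi (qs t) + e * \sum_t (ln (qs t) + 1) * v t + e ^+ 2 * Kq.
    rewrite !mulr_sumr -!big_split /=; apply: ler_sum => t _.
    have hb := phi_breg (qp t) (qe0 t).
    have e2 : qe t - qs t = e * v t by rewrite /qe; ring.
    have e1 : (e * v t) ^+ 2 / qs t = e ^+ 2 * (v t ^+ 2 / qs t) by ring.
    rewrite e2 e1 in hb; lra.
  have Pe s : Pm qe s = Pm qs s + e * Pm v s.
    by rewrite /Pm big_split /= mulr_sumr.
  have A3 : \sum_s phi (Pm qs s) + e * \sum_s (ln (Pm qs s) + 1) * Pm v s <= \sum_s phi (Pm qe s).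
    rewrite mulr_sumr -big_split /=; apply: ler_sum => s _.
    have := phi_tangent (Pp s) (Pm_ge0 s fqe); rewrite (Pe s); lra.
  have A4 : \sum_s (ln (Pm qs s) + 1) * Pm v s = \sum_t v t * (ln (Pm qs (init_t t)) + 1).
    rewrite (sum_part v (fun s => ln (Pm qs s) + 1)).
    by apply: eq_bigr => s _; rewrite mulrC.
  have A5 : D = \sum_t v t * H t - \sum_t (ln (qs t) + 1) * v t + \sum_t v t * (ln (Pm qs (init_t t)) + 1).
    rewrite -sumrB -big_split /=; apply: eq_bigr => t _; rewrite /cvec; ring.
  move: Jle; rewrite /J -/qe A1.
  rewrite A4 in A3; rewrite A5; lra.
have h1 : D <= 0.
  apply: (small_le0 e00 Kq0) => e ep ee0.
  have h0 := main e; rewrite ger0_norm in h0; last exact: ltW.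
  have h := h0 ee0.
  have : e * D <= e * (e * Kq) by rewrite mulrA -expr2; lra.
  by rewrite ler_pM2l.
have h2 : - D <= 0.
  apply: (small_le0 e00 Kq0) => e ep ee0.
  have h0 := main (- e); rewrite normrN ger0_norm in h0; last exact: ltW.
  have h := h0 ee0.
  have : e * (- D) <= e * (e * Kq) by rewrite mulrA -expr2; rewrite sqrrN mulNr in h; lra.
  by rewrite ler_pM2l.
lra.
Qed.
End Main6.

End M10.
Import M10.

Module M11.
Import Order.TTheory GRing.Theory Num.Theory.
Set Implicit Arguments. Unset Strict Implicit. Unset Printing Implicit Defensive.
Local Open Scope ring_scope.
Local Open Scope ring_scope.

Section Decomp.
Variables (R : realType) (X : finType) (d : nat) (z : X).
Local Notation S := {ffun 'I_d -> X}.
Local Notation T := {ffun 'I_d.+1 -> X}.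

Definition sh (u : S) : S := tail_t (snoc u z).
Definition zz : S := [ffun=> z].
Definition pth (s : S) (k : nat) : T := snoc (iter k sh s) z.
Definition ev (t0 : T) : T -> R := fun t => (t == t0)%:R.
Definition pathv (s : S) : T -> R := fun t => \sum_(0 <= k < d) (t == pth s k)%:R.
Definition pair (v g : T -> R) : R := \sum_t v t * g t.

Lemma pair_e t0 g : pair (ev t0) g = g t0.
Proof.
rewrite /pair (bigD1 t0) //= /ev eqxx mul1r big1 ?addr0 // => t /negbTE ->.
by rewrite mul0r.
Qed.

Lemma pair_path s g : pair (pathv s) g = \sum_(0 <= k < d) g (pth s k).
Proof.
rewrite /pair /pathv; under eq_bigr do rewrite mulr_suml.
rewrite exchange_big /=; apply: eq_bigr => k _.
exact: (pair_e (pth s k) g).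
Qed.

Lemma sum_filter_pair (P : pred T) v : \sum_(t | P t) v t = pair v (fun t => (P t)%:R).
Proof.
rewrite big_mkcond /pair; apply: eq_bigr => t _; case: (P t); rewrite ?mulr1 ?mulr0 //.
Qed.

Lemma pair_comb (a1 a2 a3 a4 a5 a6 : T -> R) (k : R) g :
  pair (fun t => a1 t + a2 t - a3 t - a4 t - a5 t + k * a6 t) g =
  pair a1 g + pair a2 g - pair a3 g - pair a4 g - pair a5 g + k * pair a6 g.
Proof.
rewrite /pair.
transitivity (\sum_t (a1 t * g t + a2 t * g t - a3 t * g t - a4 t * g t - a5 t * g t + k * (a6 t * g t))).
  by apply: eq_bigr => t _; ring.
by rewrite big_split /= !sumrB !big_split /= -mulr_sumr.
Qed.

Lemma sh_iter s k : sh (iter k sh s) = iter k.+1 sh s.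
Proof. by []. Qed.

Lemma iter_d s : iter d sh s = zz.
Proof. exact: iter_shift_d. Qed.

Lemma sh_zz : sh zz = zz.
Proof. by rewrite -[X in sh X](iter_d zz) sh_iter iterSr iter_d. Qed.

Lemma path_tele (f : S -> R) s :
  \sum_(0 <= k < d) f (init_t (pth s k)) - \sum_(0 <= k < d) f (tail_t (pth s k)) = f s - f zz.
Proof.
rewrite -sumrB.
have e : forall k, f (init_t (pth s k)) - f (tail_t (pth s k)) = - (f (iter k.+1 sh s) - f (iter k sh s)).
  by move=> k; rewrite /pth init_snoc -/(sh _) sh_iter opprB.
under eq_bigr do rewrite e.
by rewrite sumrN telescope_sumr // iter_d /= opprB.
Qed.

Variable c : T -> R.
Definition kap (s : S) : R := \sum_(0 <= k < d) c (pth s k).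
Definition del (x : X) : R := c (snoc zz x) + kap (tail_t (snoc zz x)) - d%:R * c (snoc zz z).

Hypothesis Hc : forall v : T -> R,
  (forall s : S, \sum_(t | init_t t == s) v t = \sum_(t | tail_t t == s) v t) ->
  (forall x, \sum_(t : T | t ord_max == x) v t = 0) ->
  \sum_t v t * c t = 0.

Lemma decomp t : c t = kap (init_t t) - kap (tail_t t) + del (t ord_max).
Proof.
set y := t ord_max.
set s2 := tail_t (snoc zz y).
set v := fun t' => ev t t' + pathv (tail_t t) t' - pathv (init_t t) t' - ev (snoc zz y) t'
   - pathv s2 t' + d%:R * ev (snoc zz z) t'.
have h0 : pair v c = 0.
  apply: Hc.
  - move=> u; rewrite !sum_filter_pair !pair_comb !pair_e !pair_path.
    rewrite !init_snoc.
    have tz : tail_t (snoc zz z) = zz by exact: sh_zz.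
    rewrite tz.
    have h1 := path_tele (fun s => (s == u)%:R) (tail_t t).
    have h2 := path_tele (fun s => (s == u)%:R) (init_t t).
    have h3 := path_tele (fun s => (s == u)%:R) s2.
    rewrite /= in h1 h2 h3; rewrite -/s2; lra.
  - move=> x; rewrite sum_filter_pair pair_comb !pair_e !pair_path.
    have pm s : \sum_(0 <= k < d) ((pth s k) ord_max == x)%:R = d%:R * (z == x)%:R :> R.
      under eq_bigr do rewrite /pth snoc_max.
      by rewrite sumr_const_nat subn0 mulr_natl.
    rewrite !pm !snoc_max -/y; lra.
move: h0; rewrite pair_comb !pair_e !pair_path /del -/s2.
rewrite -/(kap _) -/(kap _) -/(kap _).
lra.
Qed.
End Decomp.

End M11.
Import M11.

Unset Implicit Arguments.
Import Order.TTheory GRing.Theory Num.Theory.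
Local Open Scope ring_scope.
Local Open Scope ring_scope.

Theorem theorem2 (R : realType) (X : finType) (d : nat) (hd : (0 < d)%N)
  (H : {ffun 'I_d.+1 -> X} -> R) (r : X -> R) (hr : is_pos_dist r) :
  exists (kappa : {ffun 'I_d -> X} -> R) (delta : X -> R),
    let w := fun (s : {ffun 'I_d -> X}) (y : X) =>
      expR (H (snoc s y) + kappa (tail_t (snoc s y)) - kappa s - delta y) in
    in_Wd w /\
    (exists p, is_stationary w p) /\
    (forall p, is_stationary w p -> forall x1 : X, first_marginal hd p x1 = r x1).
Proof.
have [x0 _] := X_inhabited hr.
have [qs fqs qmax] := exists_max H hr (ex_intro _ _ (q0_feas d hr)).
have qp := all_pos hr fqs qmax.
set c := cvec H qs.
have Hc := foc hr fqs qmax.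
set P := Pm qs.
have Pp : forall s, 0 < P s.
  move=> s; apply: (lt_le_trans (qp (snoc s x0))).
  by have := le_Pm (snoc s x0) fqs; rewrite init_snoc.
exists (kap x0 c), (del x0 c) => w.
have wE : forall s y, w s y = qs (snoc s y) / P s.
  move=> s y; rewrite /w.
  have dc := decomp x0 Hc (snoc s y); rewrite init_snoc snoc_max in dc.
  have -> : H (snoc s y) + kap x0 c (tail_t (snoc s y)) - kap x0 c s - del x0 c y =
            ln (qs (snoc s y)) - ln (P s).
    move: dc; rewrite /c /cvec init_snoc -/P; lra.
  by rewrite expRB !lnK ?posrE.
have wpos : forall s y, 0 < w s y by move=> s y; rewrite wE divr_gt0.
have Pst : forall u, \sum_(t | tail_t t == u) P (init_t t) * w (init_t t) (t ord_max) = P u.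
  move=> u; rewrite [RHS]/P /Pm; case: fqs => _ -> _.
  apply: eq_bigr => t _; rewrite wE snoc_init mulrC divfK //.
  exact: lt0r_neq0.
have sP : \sum_s P s = 1 by rewrite /P sum_Pm (sum_all hr fqs).
split; [|split].
- split => // s; under eq_bigr do rewrite wE.
  rewrite -mulr_suml -sum_init -/(Pm qs s) -/P divff //; exact: lt0r_neq0.
- exists P; split => // s; exact: ltW.
move=> p [p0 ps pst] x1.
set rho := fun s => p s / P s.
have [smin hmin] : exists smin, forall s, rho smin <= rho s.
  case: (@arg_minP _ R _ [ffun=> x0] predT rho isT) => sm _ h.
  by exists sm => s; exact: h.
set al := rho smin.
set nu := fun s => p s - al * P s.
have nu0 : forall s, 0 <= nu s.
  move=> s; rewrite /nu subr_ge0 -ler_pdivlMr //; exact: hmin.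
have nusmin : nu smin = 0.
  by rewrite /nu /al /rho divfK ?subrr // lt0r_neq0.
have nust : forall u, \sum_(t | tail_t t == u) nu (init_t t) * w (init_t t) (t ord_max) = nu u.
  move=> u; rewrite /nu.
  under eq_bigr do rewrite mulrBl -mulrA.
  by rewrite sumrB -mulr_sumr Pst pst.
have prop : forall t, nu (tail_t t) = 0 -> nu (init_t t) = 0.
  move=> t h.
  have h2 : \sum_(t' | tail_t t' == tail_t t) nu (init_t t') * w (init_t t') (t' ord_max) = 0.
    by rewrite nust.
  have := psumr_eq0P _ h2 (eqxx (tail_t t)).
  move=> /(_ _) h3; have := h3 (fun j _ => mulr_ge0 (nu0 _) (ltW (wpos _ _))).
  by move/eqP; rewrite mulf_eq0 (gt_eqF (wpos _ _)) orbF => /eqP.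
have nuz : forall s, nu s = 0.
  have cl : forall t, nu (init_t t) != 0 -> nu (tail_t t) != 0.
    by move=> t; apply: contra => /eqP h; apply/eqP; exact: prop.
  move=> s; apply/eqP; apply/negPn/negP => hs.
  have := @reach X d x0 (fun s => nu s != 0) cl s smin hs.
  by rewrite /= nusmin eqxx.
have pE : forall s, p s = al * P s by move=> s; have := nuz s; rewrite /nu => /eqP; rewrite subr_eq0 => /eqP.
have al1 : al = 1.
  by move: ps; under eq_bigr do rewrite pE; rewrite -mulr_sumr sP mulr1.
rewrite /first_marginal.
under eq_bigr do rewrite pE al1 mul1r.
rewrite /P /Pm -(sum_pred_init (fun s => s (Ordinal hd) == x1)) /=.
have e0 : \sum_(t | init_t t (Ordinal hd) == x1) qs t = \sum_(t : {ffun 'I_d.+1 -> X} | t ord0 == x1) qs t.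
  apply: eq_bigl => t; rewrite ffunE; congr (t _ == x1); exact: val_inj.
case: fqs => _ qsh qm.
by rewrite e0 (marg_shift x1 qsh) qm.
Qed.
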